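(* Let $n\ge 5$ be an integer with $n\equiv 1\pmod 4$, let $\Delta_n(u,v)=(n-1)^{n-1}u^n+n^nv^{n-1}$, and let $\ell$ be an odd prime. Define $$ S_n(\ell)=\sum_{u=1}^{\ell}\sum_{v=1}^{\ell}\left(\frac{\Delta_n(u,v)}{\ell}\right). $$ Then $|S_n(\ell)|\le c\,\ell$ for some constant $c>0$ depending only on $n$.
   Context: $\left(\frac{w}{\ell}\right)$ denotes the Legendre (Jacobi) symbol of $w$ modulo $\ell$. The polynomial $\Delta_n(u,v)$ is the discriminant of $t^n+ut+v$ when $n\equiv1\pmod4$. *)

(* Defs.v *)
From mathcomp Require Import all_boot all_order all_algebra.
Set Implicit Arguments. Unset Strict Implicit. Unset Printing Implicit Defensive.
Import Order.TTheory GRing.Theory Num.Theory.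
Local Open Scope ring_scope.

Definition legendre (w l : nat) : int :=
  if (l %| w)%N then 0
  else if [exists x : 'I_l, (x ^ 2 == w %[mod l])%N] then 1 else -1.

Definition Delta (n u v : nat) : nat :=
  ((n - 1) ^ (n - 1) * u ^ n + n ^ n * v ^ (n - 1))%N.

Definition S (n l : nat) : int :=
  \sum_(1 <= u < l.+1) \sum_(1 <= v < l.+1) legendre (Delta n u v) l.

(* Main.v *)
Require Import Defs.
From mathcomp Require Import all_boot all_order all_algebra.
From mathcomp Require Import ring zify.
Set Implicit Arguments. Unset Strict Implicit. Unset Printing Implicit Defensive.
Import Order.TTheory GRing.Theory Num.Theory.
Local Open Scope ring_scope.

Section Gen.
Variable F : finFieldType.

Definition chi (y : F) : int :=
  if y == 0 then 0 else if [exists x, x ^+ 2 == y] then 1 else -1.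

Lemma chi_abs y : `|chi y| <= 1.
Proof. by rewrite /chi; case: ifP => _ //; case: ifP. Qed.

Lemma chi_sq s y : s != 0 -> chi (s ^+ 2 * y) = chi y.
Proof.
move=> s0; rewrite /chi mulf_eq0 expf_eq0 /= (negbTE s0) /=.
case: (y == 0) => //.
have -> : [exists x, x ^+ 2 == s ^+ 2 * y] = [exists x, x ^+ 2 == y] => //.
apply/existsP/existsP => -[x /eqP hx].
  exists (x / s); by rewrite expr_div_n hx mulrC mulKf // expf_neq0.
exists (s * x); by rewrite exprMn hx.
Qed.

Lemma chi_sum : (2%:R : F) != 0 -> \sum_y chi y = 0.
Proof.
move=> h2.
pose P := [set x : F | x != 0].
pose Q := [set x ^+ 2 | x in P].
have Q0 : (0 : F) \notin Q.
  apply/imsetP => -[x]; rewrite inE => xn0 /esym /eqP.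
  by rewrite expf_eq0 (negbTE xn0) andbF.
have cP : #|P| = (2 * #|Q|)%N.
  rewrite -sum1_card (partition_big (fun x => x ^+ 2) (mem Q)); last first.
    by move=> x xP; apply/imsetP; exists x.
  rewrite -[in RHS]sum1_card big_distrr /=; apply: eq_bigr => q /imsetP [s sP ->].
  rewrite muln1 sum1dep_card.
  have -> : [set x in P | x ^+ 2 == s ^+ 2] = [set s; -s].
    apply/setP => x; rewrite !inE eqf_sqr.
    case: (x =P 0) => [->|_] //=.
    move: sP; rewrite inE [0 == s]eq_sym [0 == -s]eq_sym oppr_eq0.
    by move/negbTE => ->.
  rewrite cards2.
  suff -> : (s != - s) by [].
  apply/negP => /eqP hs; move: sP; rewrite inE => /negP; apply.
  have : s * 2%:R == 0 by rewrite mulr_natr mulr2n {2}hs subrr.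
  by rewrite mulf_eq0 (negbTE h2) orbF.
have pt y : chi y = (if y \in Q then 2 else 0) - (if y \in P then 1 else 0).
  rewrite /chi inE; case: eqP => [->|yn0] /=; first by rewrite (negbTE Q0).
  case: ifP => [/existsP [x /eqP hx]|].
    suff -> : y \in Q by [].
    apply/imsetP; exists x => //; rewrite inE; apply/eqP => x0; apply: yn0.
    by rewrite -hx x0 expr0n.
  move/negbT => ne; suff -> : y \in Q = false by [].
  apply/negbTE/imsetP => -[x _ hx]; move/existsP: ne; apply; exists x.
  by rewrite hx.
rewrite (eq_bigr _ (fun y _ => pt y)) sumrB -!big_mkcond /= !sumr_const cP.
by rewrite -mulrnA mulnC subrr.
Qed.

Lemma sum_chi_bound (G : F -> F) : `|\sum_y chi (G y)| <= #|F|%:R.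
Proof.
rewrite (le_trans (ler_norm_sum _ _ _)) //.
rewrite (@le_trans _ _ (\sum_(y : F) (1:int))) //; last by rewrite sumr_const.
by apply: ler_sum => y _; exact: chi_abs.
Qed.

Lemma main_gen (k m : nat) (A B : F) : k = (m * 2)%N -> A != 0 -> (2%:R : F) != 0 ->
  `|\sum_x \sum_y chi (A * x ^+ k.+1 + B * y ^+ k)| <= (2 * #|F|)%:R.
Proof.
move=> hk A0 h2.
rewrite (bigD1 0) //=.
rewrite (le_trans (ler_normD _ _)) //.
rewrite mulSn mul1n natrD lerD ?sum_chi_bound //.
have e1 x : x != 0 -> \sum_y chi (A * x ^+ k.+1 + B * y ^+ k) =
   \sum_y chi (A * x + B * y ^+ k).
  move=> xn0; rewrite (reindex_inj (mulfI xn0)) /=.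
  apply: eq_bigr => y _.
  have -> : A * x ^+ k.+1 + B * (x * y) ^+ k = (x ^+ m) ^+ 2 * (A * x + B * y ^+ k).
    by rewrite -exprM -hk exprMn exprS; ring.
  by rewrite chi_sq // expf_neq0.
rewrite (eq_bigr _ e1) exchange_big /=.
have e2 y : \sum_(x | x != 0) chi (A * x + B * y ^+ k) = - chi (B * y ^+ k).
  have h := chi_sum h2.
  rewrite (reindex_inj (fun a b (h : A * a + B * y ^+ k = A * b + B * y ^+ k) =>
      mulfI A0 (addIr _ h))) /= (bigD1 0) //= mulr0 add0r in h.
  by move/eqP: h; rewrite addr_eq0 => /eqP ->; rewrite opprK.
rewrite (eq_bigr _ (fun y _ => e2 y)) sumrN normrN.
exact: (sum_chi_bound (fun y => B * y ^+ k)).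
Qed.
End Gen.

Lemma Fp_val_nat l (pl : prime l) (y : 'F_l) : ((val y)%:R : 'F_l) = y.
Proof.
apply: val_inj; rewrite /= (val_Fp_nat pl) modn_small //.
by rewrite -[X in (_ < X)%N](Fp_cast pl); exact: ltn_ord.
Qed.

Lemma legendre_chi l w : prime l -> legendre w l = chi ((w%:R) : 'F_l).
Proof.
move=> pl; rewrite /legendre /chi.
have -> : (w%:R == 0 :> 'F_l) = (l %| w)%N.
  by rewrite -val_eqE /= (val_Fp_nat pl) /dvdn.
case: (l %| w)%N => //.
suff -> : [exists x : 'I_l, (x ^ 2 == w %[mod l])%N] = [exists x : 'F_l, x ^+ 2 == w%:R] by [].
apply/existsP/existsP => -[x hx].
  exists ((val x)%:R); rewrite -natrX -val_eqE /= !(val_Fp_nat pl); exact: hx.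
have xl : (val x < l)%N by rewrite -[X in (_ < X)%N](Fp_cast pl); exact: ltn_ord.
exists (Ordinal xl) => /=.
rewrite -(Fp_val_nat pl x) -natrX -val_eqE /= !(val_Fp_nat pl) in hx; exact: hx.
Qed.

Lemma sum_Fp l (pl : prime l) (g : 'F_l -> int) :
  \sum_(1 <= u < l.+1) g (u%:R) = \sum_(x : 'F_l) g x.
Proof.
have l0 : (0 < l)%N by apply: prime_gt0.
have e : \sum_(0 <= u < l.+1) g (u%:R) = g 0 + \sum_(1 <= u < l.+1) g (u%:R).
  by rewrite big_ltn.
have e' : \sum_(0 <= u < l.+1) g (u%:R) = \sum_(0 <= u < l) g (u%:R) + g 0.
  by rewrite big_nat_recr //= pchar_Fp_0.
rewrite e addrC in e'; move/addIr: e' => ->.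
transitivity (\sum_(0 <= i < (Zp_trunc (pdiv l)).+2) g (i%:R)).
  by rewrite (Fp_cast pl).
rewrite big_mkord; apply: eq_bigr => x _; exact: (congr1 g (Fp_val_nat pl x)).
Qed.

Lemma legendre_abs w l : `|legendre w l| <= 1.
Proof. by rewrite /legendre; case: ifP => _ //; case: ifP. Qed.

Lemma S_triv n l : `|S n l| <= (l * l)%N%:Z.
Proof.
rewrite /S (le_trans (ler_norm_sum _ _ _)) //.
rewrite (@le_trans _ _ (\sum_(1 <= u < l.+1) (l%:Z))) //; last first.
  by rewrite sumr_const_nat subn1 /= pmulrn mulrzz -PoszM.
apply: ler_sum => u _.
rewrite (le_trans (ler_norm_sum _ _ _)) //.
rewrite (@le_trans _ _ (\sum_(1 <= v < l.+1) (1:int))) //; last first.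
  by rewrite sumr_const_nat subn1 /= natz.
apply: (@ler_sum _ _ _ _ (fun v => `|legendre (Delta n u v) l|) (fun _ => 1)) => v _; exact: legendre_abs.
Qed.

Lemma S_main k l : prime l -> (k.+1 < l)%N -> (2 < l)%N -> ~~ odd k -> `|S k.+1 l| <= (2 * l)%N%:Z.
Proof.
move=> pl kl l2 ek.
pose A : 'F_l := ((k ^ k)%N)%:R.
pose B : 'F_l := ((k.+1 ^ k.+1)%N)%:R.
have -> : S k.+1 l = \sum_(x : 'F_l) \sum_(y : 'F_l) chi (A * x ^+ k.+1 + B * y ^+ k).
  rewrite /S -(sum_Fp pl (fun x => \sum_(y : 'F_l) chi (A * x ^+ k.+1 + B * y ^+ k))).
  apply: eq_bigr => u _.
  rewrite -(sum_Fp pl (fun y => chi (A * (u%:R) ^+ k.+1 + B * y ^+ k))).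
  apply: eq_bigr => v _.
  by rewrite legendre_chi // /Delta /A /B subn1 /= natrD !natrM !natrX.
rewrite -[X in (2 * X)%N](card_Fp pl).
rewrite -natz; apply: (main_gen (m := k./2)).
- by rewrite -{1}(odd_double_half k) (negbTE ek) add0n -mul2n mulnC.
- rewrite -val_eqE /= (val_Fp_nat pl) -/(dvdn l _) (Euclid_dvdX _ _ pl).
  apply/negP => /andP [hd kp]; have := dvdn_leq kp hd.
  lia.
- rewrite -val_eqE /= (Fp_cast pl) !modn_small //; lia.
Qed.

Theorem lemma1 (n : nat) (hn5 : (5 <= n)%N) (hn1 : n = 1 %[mod 4]) :
  exists c : rat, 0 < c /\
    forall l : nat, prime l -> odd l ->
      `|S n l|%:~R <= c * l%:R.
Proof.
exists ((n + 2)%N%:R); split; first by rewrite ltr0n addn2.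
move=> l pl ol.
have h : `|S n l| <= ((n + 2) * l)%N%:Z.
  case: (leqP l n) => ln.
    apply: (le_trans (S_triv n l)); rewrite lez_nat leq_mul2r.
    by apply/orP; right; lia.
  case: n hn5 hn1 ln => [//|k] hn5 hn1 ln.
  apply: (le_trans (S_main pl ln _ _)); first by lia.
    move: hn1; rewrite -addn1 -modnDml => h1.
    have : (k %% 4 = 0)%N.
      by move: h1; have := ltn_pmod k (isT : (0 < 4)%N); lia.
    move=> /eqP; rewrite -/(dvdn 4 k) => /(dvdn_trans (isT : (2 %| 4)%N)).
    by rewrite dvdn2.
  by rewrite lez_nat leq_mul2r; apply/orP; right; lia.
rewrite -natrM.
have -> : (((n + 2) * l)%N%:R : rat) = (((n + 2) * l)%N%:Z)%:~R by [].
by rewrite ler_int.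
Qed.
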